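(* Let $A$ be a cartesian cubical set. The canonical map $p:A^{\mathrm{I}}\to A\times A$ has the path-lifting property if and only if $A$ has $2$-box filling.
   Context: Cartesian cubical sets are presheaves on $\mathbb{B}^{op}$, where $\mathbb{B}$ is the category of finite sets $[n]=\{\bot,x_1,\dots,x_n,\top\}$ ($n\ge0$, $\bot\ne\top$) and functions preserving $\bot,\top$. $\mathrm{I}^n$ is the representable on $[n]$, $\mathrm{I}^n\cong\mathrm{I}\times\dots\times\mathrm{I}$ with $\mathrm{I}=\mathrm{I}^1$, $\mathrm{I}^0=1$; the two maps $[1]\to[0]$ in $\mathbb{B}$ give endpoints $0,1:1\to\mathrm{I}$, and $\partial\mathrm{I}=1+1\to\mathrm{I}$ is their copairing. $p:A^{\mathrm{I}}\to A^{\partial\mathrm{I}}\cong A\times A$ is induced by $\partial\mathrm{I}\to\mathrm{I}$. A map $q:E\to D$ has the path-lifting property if for each endpoint $\delta\in\{0,1\}$, $\delta:1\to\mathrm{I}$, every commutative square with $\delta$ on the left and $q$ on the right (i.e. maps $u:1\to E$, $v:\mathrm{I}\to D$ with $qu=v\delta$) has a diagonal filler $w:\mathrm{I}\to E$ with $w\delta=u$, $qw=v$. For $1\le i\le n$ and $d\in\{0,1\}$, the face $\alpha_i^d:\mathrm{I}^{n-1}\to\mathrm{I}^n$ inserts the endpoint $d$ in the $i$-th coordinate. For $e\in\{0,1\}$, the open box $\sqcup^n_e\rightarrowtail\mathrm{I}^n$ is the union in the subobject lattice of $\mathrm{I}^n$ of the images of all faces $\alpha_i^d$ with $(i,d)\ne(1,e)$.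 A cubical set $A$ has $n$-box filling if for each $e\in\{0,1\}$ every map $\sqcup^n_e\to A$ extends along the inclusion $\sqcup^n_e\rightarrowtail\mathrm{I}^n$. *)

(* Defs.v *)
(* Cartesian cubical sets as covariant functors B -> Type. *)
From mathcomp Require Import all_boot.
Set Implicit Arguments. Unset Strict Implicit. Unset Printing Implicit Defensive.

(* Elements of [m] = {bot, x_1..x_m, top}: inl false = bot (endpoint 0),
   inl true = top (endpoint 1), inr j = x_(j+1). *)
Definition pt (m : nat) : finType := (bool + 'I_m)%type.

(* Morphisms [n] -> [m] of B preserving bot, top: determined by the images
   of x_1..x_n. *)
Definition Bmor (n m : nat) : finType := {ffun 'I_n -> pt m}.

Definition Bid (n : nat) : Bmor n n := [ffun i => inr i].

(* Bcomp f g = g o f *)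
Definition Bcomp n m k (f : Bmor n m) (g : Bmor m k) : Bmor n k :=
  [ffun i => match f i with inl b => inl b | inr j => g j end].

Lemma Bcomp_assoc n m k l (f : Bmor n m) (g : Bmor m k) (h : Bmor k l) :
  Bcomp f (Bcomp g h) = Bcomp (Bcomp f g) h.
Proof. by apply/ffunP => i; rewrite !ffunE; case: (f i) => // j; rewrite ffunE. Qed.

(* Data of a (covariant) functor B -> Type: a presheaf on B^op. *)
Record cdata := CData {
  ob :> nat -> Type;
  act : forall n m, Bmor n m -> ob n -> ob m }.
Arguments act {c n m}.

Definition is_cubical_set (A : cdata) : Prop :=
  (forall n (x : A n), act (Bid n) x = x) /\
  (forall n m k (f : Bmor n m) (g : Bmor m k) (x : A n),
      act (Bcomp f g) x = act g (act f x)).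

Record nat_trans (X Y : cdata) := NatTrans {
  nt :> forall n, X n -> Y n;
  nt_nat : forall n m (f : Bmor n m) (x : X n), nt (act f x) = act f (nt x) }.
Arguments nt {X Y} n0 {n} : rename.

(* Representable I^n = y[n]. *)
Definition yon (n : nat) : cdata := @CData (fun m => Bmor n m : Type)
  (fun m k (h : Bmor m k) (f : Bmor n m) => Bcomp f h).
Definition Iv : cdata := yon 1.
Definition one : cdata := @CData (fun _ => unit) (fun _ _ _ x => x).
Definition prodc (X Y : cdata) : cdata := @CData (fun n => (X n * Y n)%type)
  (fun n m f xy => (act f xy.1, act f xy.2)).

Section Expo.
Variables (A Y : cdata).
Definition expo_act n m (f : Bmor n m)
  (a : nat_trans (prodc (yon n) Y) A) : nat_trans (prodc (yon m) Y) A.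
Proof.
refine (@NatTrans (prodc (yon m) Y) A
  (fun k gy => nt a (Bcomp f gy.1, gy.2)) _).
move=> k l h [g y] /=.
by rewrite -(nt_nat a) /= Bcomp_assoc.
Defined.
Definition expo : cdata :=
  @CData (fun n => nat_trans (prodc (yon n) Y) A) expo_act.
End Expo.

(* Endpoints 0,1 : 1 -> I, induced by the two maps [1] -> [0]. *)
Definition endpt (b : bool) (n : nat) : Bmor 1 n := [ffun _ => inl b].

Definition delta (b : bool) : nat_trans one Iv.
Proof.
refine (@NatTrans one Iv (fun n _ => endpt b n) _).
by move=> n m f x; apply/ffunP => i; rewrite !ffunE.
Defined.

Lemma Bcomp_id_l n m (f : Bmor n m) : Bcomp (Bid n) f = f.
Proof. by apply/ffunP => i; rewrite !ffunE. Qed.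
Lemma Bcomp_id_r n m (f : Bmor n m) : Bcomp f (Bid m) = f.
Proof. by apply/ffunP => i; rewrite !ffunE; case: (f i) => // j; rewrite ffunE. Qed.

(* p : A^I -> A^{dI} = A x A, restriction along the two endpoints
   (A^{dI}([n]) = Hom(y[n] x (1+1), A) identified with A([n]) x A([n]) by Yoneda). *)
Definition pathp (A : cdata) : nat_trans (expo A Iv) (prodc A A).
Proof.
refine (@NatTrans (expo A Iv) (prodc A A)
  (fun n a => (nt a (Bid n, endpt false n), nt a (Bid n, endpt true n))) _).
move=> n m f a /=.
have E b : (Bcomp f (Bid m), endpt b m) = @act (prodc (yon n) Iv) _ _ f (Bid n, endpt b n).
  rewrite /= Bcomp_id_l Bcomp_id_r; congr pair; by apply/ffunP => i; rewrite !ffunE.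
by rewrite !E !(nt_nat a).
Defined.

Definition path_lifting (E D : cdata) (q : nat_trans E D) : Prop :=
  forall (b : bool) (u : nat_trans one E) (v : nat_trans Iv D),
    (forall n (x : one n), q n (u n x) = v n (delta b n x)) ->
    exists w : nat_trans Iv E,
      (forall n (x : one n), w n (delta b n x) = u n x) /\
      (forall n (x : Iv n), q n (w n x) = v n x).

(* Face alpha_i^d : I^k -> I^(k+1) inserting endpoint d at coordinate i,
   induced (Yoneda) by the B-map [k+1] -> [k] sending x_i to d. *)
Definition degB k (i : 'I_k.+1) (d : bool) : Bmor k.+1 k :=
  [ffun j => match unlift i j with None => inl d | Some j' => inr j' end].
Definition face k (i : 'I_k.+1) (d : bool) m (g : Bmor k m) : Bmor k.+1 m :=
  Bcomp (degB i d) g.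

(* Open box: union of the images of all faces alpha_i^d with (i,d) <> (1,e)
   (ord0 is the first coordinate). *)
Definition in_box k (e : bool) m (f : Bmor k.+1 m) : bool :=
  [exists i : 'I_k.+1, exists d : bool, exists g : Bmor k m,
     ((i, d) != (ord0, e)) && (f == face i d g)].

Definition box_filling_succ (A : cdata) (k : nat) : Prop :=
  forall (e : bool) (phi : forall m (f : Bmor k.+1 m), in_box e f -> A m),
    (forall m l (h : Bmor m l) (f : Bmor k.+1 m) (pf : in_box e f)
            (pf' : in_box e (Bcomp f h)),
        phi l (Bcomp f h) pf' = act h (phi m f pf)) ->
    exists psi : nat_trans (yon k.+1) A,
      forall m (f : Bmor k.+1 m) (pf : in_box e f), psi m f = phi m f pf.

Definition has_box_filling (A : cdata) (n : nat) : Prop :=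
  forall k, n = k.+1 -> box_filling_succ A k.

(* Main.v *)
Require Import Defs.
From mathcomp Require Import all_boot.
From Stdlib Require Import FunctionalExtensionality ProofIrrelevance.
Set Implicit Arguments. Unset Strict Implicit. Unset Printing Implicit Defensive.

Definition o1 : 'I_2 := Ordinal (isT : 1 < 2).
Lemma ord2 (j : 'I_2) : j = ord0 \/ j = o1.
Proof. case: j => [[|[|k]] Hk]; [left|right|]; try by apply/val_inj. by []. Qed.

Definition ptmap m l (h : Bmor m l) (p : pt m) : pt l :=
  match p with inl b => inl b | inr j => h j end.
Lemma BcompE n m l (f : Bmor n m) (h : Bmor m l) i : Bcomp f h i = ptmap h (f i).
Proof. by rewrite ffunE. Qed.
Definition c1 m (p : pt m) : Bmor 1 m := [ffun _ => p].
Definition c2 m (p q : pt m) : Bmor 2 m := [ffun i => if i == ord0 then p else q].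
Lemma c1E m (x : Bmor 1 m) : x = c1 (x ord0).
Proof. by apply/ffunP => i; rewrite ffunE (ord1 i). Qed.
Lemma c2E m (f : Bmor 2 m) : f = c2 (f ord0) (f o1).
Proof. by apply/ffunP => i; rewrite ffunE; case: (ord2 i) => ->. Qed.
Lemma c2_0 m (p q : pt m) : c2 p q ord0 = p. Proof. by rewrite ffunE. Qed.
Lemma c2_1 m (p q : pt m) : c2 p q o1 = q. Proof. by rewrite ffunE. Qed.
Lemma c1_comp m l (p : pt m) (h : Bmor m l) : Bcomp (c1 p) h = c1 (ptmap h p).
Proof. by apply/ffunP => i; rewrite !ffunE. Qed.
Lemma c2_comp m l (p q : pt m) (h : Bmor m l) :
  Bcomp (c2 p q) h = c2 (ptmap h p) (ptmap h q).
Proof. by apply/ffunP => i; rewrite !ffunE; case: (i == ord0). Qed.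
Lemma endptE b m : endpt b m = c1 (inl b). Proof. by []. Qed.

Lemma face_at k (i : 'I_k.+1) d m (g : Bmor k m) : face i d g i = inl d.
Proof. by rewrite /face ffunE /degB ffunE unlift_none. Qed.

Lemma in_boxP e m (f : Bmor 2 m) :
  in_box e f -> f ord0 = inl (~~ e) \/ exists d, f o1 = inl d.
Proof.
case/existsP => i /existsP [d /existsP [g /andP [ne /eqP E]]].
have fi : f i = inl d by rewrite E face_at.
case: (ord2 i) => Ei; subst i.
- left; rewrite fi; congr inl; case: d e ne {fi E} => [] [] //.
- by right; exists d.
Qed.

Lemma box0 e m (f : Bmor 2 m) : f ord0 = inl (~~ e) -> in_box e f.
Proof.
move=> H; apply/existsP; exists ord0; apply/existsP; exists (~~ e).
apply/existsP; exists (c1 (f o1)); apply/andP; split.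
  by rewrite xpair_eqE; case: e {H}.
apply/eqP/ffunP => j; rewrite /face ffunE /degB ffunE.
case: unliftP => [j' ->|->] //=; rewrite ffunE.
by have -> : lift ord0 j' = o1 by apply/val_inj; rewrite (ord1 j').
Qed.

Lemma box1 e m (f : Bmor 2 m) d : f o1 = inl d -> in_box e f.
Proof.
move=> H; apply/existsP; exists o1; apply/existsP; exists d.
apply/existsP; exists (c1 (f ord0)); apply/andP; split; first by [].
apply/eqP/ffunP => j; rewrite /face ffunE /degB ffunE.
case: unliftP => [j' ->|->] //=; rewrite ffunE.
by have -> : lift o1 j' = ord0 by apply/val_inj; rewrite (ord1 j').
Qed.

Lemma nt_eq X Y (a b : nat_trans X Y) :
  (forall n x, @nt _ _ a n x = @nt _ _ b n x) -> a = b.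
Proof.
case: a b => [a Ha] [b Hb] /= H.
have E : a = b.
  apply: functional_extensionality_dep => n; apply: functional_extensionality => x; exact: H.
subst b; congr NatTrans; apply: proof_irrelevance.
Qed.


Definition sel (T : Type) m (p : pt m) (xy : T * T) : T :=
  if p == inl true then xy.2 else xy.1.

Lemma from_box (A : cdata) (HA : is_cubical_set A) :
  has_box_filling A 2 -> path_lifting (pathp A).
Proof.
move=> BF b u v Huv.
have uN : forall m l k (h : Bmor m l) (g : Bmor l k) (y : Bmor 1 k),
    @nt _ _ (u l tt) k (g, y) = @nt _ _ (u m tt) k (Bcomp h g, y).
  by move=> m l k h g y; rewrite -[tt]/(@act Defs.one _ _ h tt) (nt_nat u).
have uI : forall m k l (h : Bmor k l) (g : Bmor m k) (y : Bmor 1 k),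
    @nt _ _ (u m tt) _ (Bcomp g h, Bcomp y h) = act h (@nt _ _ (u m tt) _ (g, y)).
  by move=> m k l h g y; rewrite -(nt_nat (u m tt)).
have vN : forall m l (h : Bmor m l) (x : Bmor 1 m),
    v l (Bcomp x h) = (act h (v m x).1, act h (v m x).2).
  by move=> m l h x; rewrite -[Bcomp x h]/(@act Iv _ _ h x) (nt_nat v).
have Hu : forall m, v m (c1 (inl b)) =
     (@nt _ _ (u m tt) _ (Bid m, c1 (inl false)), @nt _ _ (u m tt) _ (Bid m, c1 (inl true))).
  by move=> m; rewrite -[c1 (inl b)]/(delta b m tt) -Huv.
pose phi m (f : Bmor 2 m) (pf : in_box (~~ b) f) : A m :=
  if f ord0 == inl b then @nt _ _ (u m tt) _ (Bid m, c1 (f o1))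
  else sel (f o1) (v m (c1 (f ord0))).
have [|psi Hpsi] := BF 1 erefl (~~ b) phi.
  move=> m l h f pf pf'; rewrite /phi !BcompE.
  have [E0|N0] := eqVneq (f ord0) (inl b).
    rewrite E0 /= eqxx (uN _ _ _ h) -c1_comp.
    have := uI _ _ _ h (Bid m) (c1 (f o1)). simpl. move=> <-.
    by rewrite Bcomp_id_r Bcomp_id_l.
  case: (in_boxP pf) => [|[d Ed]]; first by rewrite negbK => E; rewrite E eqxx in N0.
  rewrite Ed /=.
  have sA : forall (xy : A m * A m), sel (inl d : pt l) (act h xy.1, act h xy.2) = act h (sel (inl d : pt m) xy).
    by move=> xy; rewrite /sel; case: d {Ed}; rewrite ?eqxx //=.
  case: eqP => [E1|N1].
    by rewrite -sA -vN c1_comp E1 Hu /sel; case: d {Ed sA}; rewrite ?eqxx.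
  by rewrite -sA -vN c1_comp.
have Wnat : forall n (x : Bmor 1 n) k l (h : Bmor k l) (gy : Bmor n k * Bmor 1 k),
  psi l (c2 (Bcomp x (Bcomp gy.1 h) ord0) (Bcomp gy.2 h ord0)) =
  act h (psi k (c2 (Bcomp x gy.1 ord0) (gy.2 ord0))).
  move=> n x k l h gy; rewrite -(nt_nat psi) /= c2_comp; congr (psi l (c2 _ _)).
    by rewrite Bcomp_assoc BcompE.
  by rewrite BcompE.
pose W n (x : Bmor 1 n) : nat_trans (prodc (yon n) Iv) A :=
  @NatTrans (prodc (yon n) Iv) A
    (fun k gy => psi k (c2 (Bcomp x gy.1 ord0) (gy.2 ord0))) (Wnat n x).
have Wn : forall n m (f : Bmor n m) (x : Bmor 1 n), W m (Bcomp x f) = expo_act f (W n x).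
  by move=> n m f x; apply: nt_eq => k [g y] /=; rewrite Bcomp_assoc.
exists (@NatTrans Iv (expo A Iv) W Wn); split.
  move=> n [] /=; apply: nt_eq => k [g y] /=.
  rewrite BcompE ffunE /=.
  have pf : in_box (~~ b) (c2 (inl b : pt k) (y ord0)) by apply: box0; rewrite c2_0 negbK.
  rewrite (Hpsi _ _ pf).
  rewrite /phi c2_0 eqxx c2_1 (uN _ _ _ g) Bcomp_id_r.
  by rewrite -(c1E y).
move=> n x /=; rewrite Bcomp_id_r !ffunE.
rewrite (Hpsi _ _ (box1 (~~ b) (c2_1 (x ord0) (inl false)))).
rewrite (Hpsi _ _ (box1 (~~ b) (c2_1 (x ord0) (inl true)))) /phi !c2_0 !c2_1.
case: eqP => [E|N].
  by rewrite (c1E x) E -Hu.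
rewrite [in RHS](c1E x) /sel /=.
by case: (v n _).
Qed.


Lemma to_box (A : cdata) (HA : is_cubical_set A) :
  path_lifting (pathp A) -> has_box_filling A 2.
Proof.
move=> PL kk [<-] e phi phinat.
have phi_eq : forall m f1 f2 pf1 pf2, f1 = f2 -> phi m f1 pf1 = phi m f2 pf2.
  move=> m f1 f2 pf1 pf2 E; subst f2; congr phi; exact: bool_irrelevance.
have pf0 : forall m (q : pt m), in_box e (c2 (inl (~~ e)) q) by move=> m q; apply: box0; rewrite c2_0.
have pf1 : forall m (p : pt m) d, in_box e (c2 p (inl d)) by move=> m p d; apply: (box1 e (c2_1 _ _)).
have Unat : forall n k l (h : Bmor k l) (gy : Bmor n k * Bmor 1 k),
   phi l (c2 (inl (~~ e)) (Bcomp gy.2 h ord0)) (pf0 _ _) =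
   act h (phi k (c2 (inl (~~ e)) (gy.2 ord0)) (pf0 _ _)).
  move=> n k l h gy; rewrite -(phinat _ _ _ _ _ (box0 (f:=Bcomp (c2 (inl (~~ e)) (gy.2 ord0)) h) _)).
    by rewrite BcompE c2_0.
  by move=> ?; apply: phi_eq; rewrite c2_comp BcompE.
pose U n : nat_trans (prodc (yon n) Iv) A :=
  @NatTrans (prodc (yon n) Iv) A
    (fun k gy => phi k (c2 (inl (~~ e)) (gy.2 ord0)) (pf0 _ _)) (Unat n).
have Un : forall n m (f : Bmor n m) (x : Defs.one n), U m = @act (expo A Iv) _ _ f (U n).
  by move=> n m f x; apply: nt_eq.
pose u := @NatTrans Defs.one (expo A Iv) (fun n _ => U n) Un.
have Vnat : forall n m (f : Bmor n m) (x : Bmor 1 n),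
   (phi m (c2 (Bcomp x f ord0) (inl false)) (pf1 _ _ _), phi m (c2 (Bcomp x f ord0) (inl true)) (pf1 _ _ _))
   = (act f (phi n (c2 (x ord0) (inl false)) (pf1 _ _ _)), act f (phi n (c2 (x ord0) (inl true)) (pf1 _ _ _))).
  move=> n m f x; congr pair.
    rewrite -(phinat _ _ _ _ _ (box1 e (d:=false) _)); first by rewrite BcompE c2_1.
    by move=> ?; apply: phi_eq; rewrite c2_comp BcompE.
  rewrite -(phinat _ _ _ _ _ (box1 e (d:=true) _)); first by rewrite BcompE c2_1.
  by move=> ?; apply: phi_eq; rewrite c2_comp BcompE.
pose v := @NatTrans Iv (prodc A A)
  (fun n x => (phi n (c2 (x ord0) (inl false)) (pf1 _ _ _), phi n (c2 (x ord0) (inl true)) (pf1 _ _ _)))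
  Vnat.
case: (PL (~~ e) u v) => [|w [Hw1 Hw2]].
  by move=> n [] /=; congr pair; apply: phi_eq; rewrite /endpt !ffunE.
have wN : forall m l (h : Bmor m l) (x : Bmor 1 m),
    w l (Bcomp x h) = @act (expo A Iv) _ _ h (w m x).
  by move=> m l h x; rewrite -(nt_nat w).
have Psinat : forall m l (h : Bmor m l) (f : Bmor 2 m),
  @nt _ _ (w l (c1 (Bcomp f h ord0))) l (Bid l, c1 (Bcomp f h o1)) =
  act h (@nt _ _ (w m (c1 (f ord0))) m (Bid m, c1 (f o1))).
  move=> m l h f; rewrite !BcompE -!c1_comp wN /=.
  rewrite -(nt_nat (w m (c1 (f ord0)))) /=.
  by rewrite Bcomp_id_l Bcomp_id_r.
exists (@NatTrans (yon 2) A (fun m f => @nt _ _ (w m (c1 (f ord0))) m (Bid m, c1 (f o1))) Psinat).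
move=> m f pf /=.
case: (in_boxP pf) => [E|[d E]].
  rewrite E -[c1 (inl (~~ e))]/(delta (~~ e) m tt) Hw1 /=.
  by apply: phi_eq; rewrite [RHS]c2E E ffunE.
have := Hw2 m (c1 (f ord0)).
rewrite /= E; case: d E => E [H0 H1].
  by rewrite -[c1 (inl true)]/(endpt true m) H1; apply: phi_eq; rewrite [RHS]c2E E ffunE.
by rewrite -[c1 (inl false)]/(endpt false m) H0; apply: phi_eq; rewrite [RHS]c2E E ffunE.
Qed.

Theorem proposition2p8 (A : cdata) (HA : is_cubical_set A) :
  path_lifting (pathp A) <-> has_box_filling A 2.
Proof. split; [exact: to_box | exact: from_box]. Qed.
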